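(* Let $u$ and $v$ be vertices of $G$ and let $\delta_T(u,v)$ denote the length of the path from $u$ to $v$ in $T$. The routing algorithm, when routing from $u$ to $v$, terminates after a finite number of steps, and the total weight (in $G$) of the path it traverses is exactly $\delta_T(u,v)$; in particular the routing ratio with respect to the tree metric induced by $T$ is $1$.
   Context: Let $T$ be a rooted tree on $n$ vertices with positive edge weights; $P(a,b)$ is the path in $T$ from $a$ to $b$ and $\delta_T(a,b)$ its weight. Ancestor/descendant refer to $T$, and a vertex counts as its own ancestor and descendant; ''deepest''/''highest'' refer to depth in $T$. $T_v$ is the subtree of $T$ rooted at $v$. For every non-leaf vertex $v$ fix a child $c_1(v)$ with $|T_{c_1(v)}|$ maximal; edges $(v,c_1(v))$ are leftmost. A subtree $R$ of $T$ is rooted at its vertex closest to the root, $rt(R)$, and inherits the leftmost labelling; $R_v$ is the subtree of $R$ rooted at $v$. $P_R(v)$ is the longest downward path from $v$ in $R$ using only leftmost edges, with last vertex $l(v)$; $l(R):=l(rt(R))$. A vertex $v$ of $R$ is $d$-balanced if $|R_{c_1(v)}|\le |R|-d$ (with $|R_{c_1(v)}|=0$ if $c_1(v)$ is undefined or not in $R$); $b_d(v)$ is the first $d$-balanced vertex on $P_R(v)$, or NULL. $CV(R,d)=\emptyset$ if $b_d(rt(R))$ is NULL, else $\{b\}\cup\bigcup_w CV(R_w,d)$ with $b=b_d(rt(R))$ and $w$ ranging over children of $b$ in $R$. Fix an integer $k\ge4$; for a subtree $R$ with $m$ vertices, $C_R=V(R)$ if $k\ge m/2-1$, else $C_R=CV(R,m/k)\cup\{l(R),rt(R)\}$.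 Canonical subtrees: $T$ is canonical; if $R$ is canonical, each component of $R$ minus $C_R$ is canonical. Each vertex $v$ lies in $C_R$ for exactly one canonical $R$, denoted $T^v$. The spanner $G$ has vertex set $V(T)$ and edges: all edges of $T$, and all pairs of distinct vertices of $C_R$ for every canonical $R$; edge $(a,b)$ has weight $\delta_T(a,b)$. Routing algorithm from current vertex $u$ to destination $v$, repeated until $v$ is reached: Case 0: if $v$ is adjacent to $u$, move to $v$. Case 1: $u$ is an ancestor of $v$; let $X$ be the vertices of $C_{T^u}$ that are ancestors of $v$, $x$ the deepest; move to $x$, then to the child of $x$ that is an ancestor of $v$. Case 2: $u$ is a descendant of $v$; let $X$ be the vertices of $C_{T^u}$ that are descendants of $v$ and ancestors of $u$, $x$ the highest; move to $x$, then to the parent of $x$. Case 3: $u$ is neither; let $X$ be the vertices of $C_{T^u}$ that are ancestors of $v$ but not of $u$, and $Y$ those that are ancestors of $u$ but not of $v$, $y$ the highest vertex of $Y$. Case 3 a): $X=\emptyset$: move to $y$, then to the parent of $y$. Case 3 b): $X\neq\emptyset$: with $x$ the deepest vertex of $X$ and $x'$ the child of $x$ that is an ancestor of $v$, move to $x$, then to $x'$. (Moving to the current vertex means staying.) *)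

(* Defs.v *)
From mathcomp Require Import all_boot all_order all_algebra.
Set Implicit Arguments.
Unset Strict Implicit.
Unset Printing Implicit Defensive.
Import Order.TTheory GRing.Theory Num.Theory.

(* A rooted tree on the finite vertex type V (n = #|V|) is given by its root
   r and a parent map par, with par r = r and every vertex reaching r by
   iterating par.  The edges of T are the pairs (x, par x), x != r; the
   weight of edge (x, par x) is w x. *)

Section Tree.
Variables (V : finType) (r : V) (par : V -> V).

Definition is_rooted_tree : Prop :=
  par r = r /\ forall x : V, exists i, iter i par x = r.

(* x is an ancestor of y (reflexive).  In a tree every ancestor is reached
   in fewer than #|V| parent steps. *)
Definition anc (x y : V) : bool := [exists i : 'I_#|V|, iter i par y == x].

Definition child (c v : V) : bool := (c != r) && (par c == v).

Definition adjT (x y : V) : bool := child x y || child y x.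

Definition dep (x : V) : nat := #|[set y | anc y x]|.

Definition tsize (v : V) : nat := #|[set y | anc v y]|.

Definition heavy_child_spec (c1 : V -> option V) : Prop :=
  forall v, match c1 v with
            | Some c => child c v /\ forall c', child c' v -> tsize c' <= tsize c
            | None => forall c, ~~ child c v
            end.

(* tree distance delta_T(a,b): the edges (x, par x) of P(a,b) are exactly
   those with x an ancestor of exactly one of a, b. *)
Definition dT (R : numDomainType) (w : V -> R) (a b : V) : R :=
  \sum_(x | anc x a (+) anc x b) w x.

Section Sub.
Variables (c1 : V -> option V) (k : nat).

Definition Rsub (R : {set V}) (v : V) : {set V} := [set x in R | anc v x].

Definition rtS (R : {set V}) : V := odflt r [pick x in R | [forall y in R, anc x y]].

(* one step along a leftmost edge inside R (stays at the end of P_R) *)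
Definition lstep (R : {set V}) (x : V) : V :=
  if c1 x is Some c then (if c \in R then c else x) else x.

(* l(v) : last vertex of P_R(v) *)
Definition lR (R : {set V}) (v : V) : V := iter #|V| (lstep R) v.

Definition c1size (R : {set V}) (v : V) : nat :=
  if c1 v is Some c then (if c \in R then #|Rsub R c| else 0) else 0.

(* v is d-balanced in R, where d = m / k:  |R_{c1 v}| <= |R| - m/k *)
Definition balanced (m : nat) (R : {set V}) (v : V) : bool :=
  k * c1size R v + m <= k * #|R|.

Definition bd (m : nat) (R : {set V}) (v : V) : option V :=
  let s := [seq iter i (lstep R) v | i <- iota 0 #|V|.+1] in
  let i := find (balanced m R) s in
  if i < size s then Some (nth v s i) else None.

(* CV(R, m/k), computed with fuel (#|V| levels suffice) *)
Fixpoint CVf (fuel m : nat) (R : {set V}) : {set V} :=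
  match fuel with
  | 0 => set0
  | f.+1 =>
      match bd m R (rtS R) with
      | None => set0
      | Some b => b |: \bigcup_(w in R | child w b) CVf f m (Rsub R w)
      end
  end.

Definition CV (m : nat) (R : {set V}) : {set V} := CVf #|V| m R.

(* C_R ; k >= m/2 - 1  <->  m <= 2k + 2 *)
Definition CR (R : {set V}) : {set V} :=
  let m := #|R| in
  if m <= 2 * k + 2 then R else CV m R :|: [set lR R (rtS R); rtS R].

Definition subtreeb (S : {set V}) : bool :=
  [exists t in S, [forall x in S, anc t x && ((x == t) || (par x \in S))]].

Definition component (A S : {set V}) : bool :=
  [&& S != set0, S \subset A, subtreeb S &
      [forall x in S, forall y in A, adjT x y ==> (y \in S)]].

(* canonical subtrees, level by level (#|V| levels suffice) *)
Fixpoint canl (f : nat) : {set {set V}} :=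
  match f with
  | 0 => [set setT]
  | f'.+1 => canl f' :|: \bigcup_(R in canl f') [set S | component (R :\: CR R) S]
  end.

Definition canonicals : {set {set V}} := canl #|V|.

Definition Tu (u : V) : {set V} := odflt setT [pick R in canonicals | u \in CR R].

Definition adjG (a b : V) : bool :=
  (a != b) && (adjT a b || [exists R in canonicals, (a \in CR R) && (b \in CR R)]).

Definition deepest (X : {set V}) (d : V) : V :=
  odflt d [pick x in X | [forall y in X, dep y <= dep x]].
Definition highest (X : {set V}) (d : V) : V :=
  odflt d [pick x in X | [forall y in X, dep x <= dep y]].
Definition childTo (x v : V) : V := odflt x [pick c | child c x && anc c v].

Definition rstep (u v : V) : seq V :=
  let C := CR (Tu u) in
  if adjG u v then [:: v]
  else if anc u v then
    let x := deepest [set x in C | anc x v] u in [:: x; childTo x v]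
  else if anc v u then
    let x := highest [set x in C | anc v x && anc x u] u in [:: x; par x]
  else
    let X := [set x in C | anc x v && ~~ anc x u] in
    let Y := [set y in C | anc y u && ~~ anc y v] in
    if X == set0 then let y := highest Y u in [:: y; par y]
    else let x := deepest X u in [:: x; childTo x v].

Fixpoint route (f : nat) (u v : V) : seq V :=
  match f with
  | 0 => [::]
  | f'.+1 => if u == v then [::]
             else let s := rstep u v in s ++ route f' (last u s) v
  end.

End Sub.

(* weight of a walk x, s_1, s_2, ... (each move (a,b) has weight delta_T(a,b)) *)
Fixpoint walkw (R : numDomainType) (w : V -> R) (x : V) (s : seq V) : R :=
  match s with
  | [::] => 0
  | y :: s' => dT w x y + walkw w y s'
  end.

End Tree.

(* Main.v *)
Require Import Defs.
From mathcomp Require Import all_boot all_order all_algebra.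
From mathcomp Require Import zify.
Import Order.TTheory GRing.Theory Num.Theory.
Set Implicit Arguments. Unset Strict Implicit. Unset Printing Implicit Defensive.

Section TreeLemmas.
Variables (V : finType) (r : V) (par : V -> V).
Hypothesis Htree : is_rooted_tree r par.

Notation anc := (anc par).

Lemma ancP x y : reflect (exists n, iter n par y = x) (anc x y).
Proof.
apply: (iffP existsP) => [[i /eqP <-]|[n Hn]]; first by exists i.
have Hc : fconnect par y x by rewrite -Hn fconnect_iter.
have Hlt : findex par y x < #|V| := leq_trans (findex_max Hc) (max_card _).
by exists (Ordinal Hlt); rewrite /= iter_findex.
Qed.

Lemma anc_refl x : anc x x.
Proof. by apply/ancP; exists 0. Qed.

Lemma anc_trans x y z : anc x y -> anc y z -> anc x z.
Proof.
move=> /ancP[i <-] /ancP[j <-]; apply/ancP; exists (i + j).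
by rewrite iterD.
Qed.

Lemma iter_r n : iter n par r = r.
Proof. by elim: n => //= n ->; case: Htree. Qed.

Lemma anc_r x : anc r x.
Proof. by case: Htree => _ /(_ x) [n Hn]; apply/ancP; exists n. Qed.

Lemma anc_par x : anc (par x) x.
Proof. by apply/ancP; exists 1. Qed.

Lemma anc_step z y : anc z y -> z = y \/ anc z (par y).
Proof.
move=> /ancP[[|n]]; first by left.
by rewrite iterSr => Hn; right; apply/ancP; exists n.
Qed.

Lemma anc_comp a b v : anc a v -> anc b v -> anc a b || anc b a.
Proof.
move=> /ancP[i <-] /ancP[j <-].
case: (leqP i j) => Hij.
  by apply/orP; right; apply/ancP; exists (j - i); rewrite -iterD subnK.
by apply/orP; left; apply/ancP; exists (i - j); rewrite -iterD subnK // ltnW.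
Qed.

Lemma iter_mul y p q : iter p par y = y -> iter (q * p) par y = y.
Proof. by move=> Hp; elim: q => //= q IH; rewrite mulSn iterD IH Hp. Qed.

Lemma anc_antisym x y : anc x y -> anc y x -> x = y.
Proof.
move=> /ancP[i Hi] /ancP[j Hj].
case: i Hi => [|i] Hi; first by [].
have Hp : iter (j + i.+1) par y = y by rewrite iterD Hi Hj.
case: Htree => _ /(_ y) [m Hm].
have Hq := iter_mul m Hp.
have Hle : m <= m * (j + i.+1) by rewrite leq_pmulr // addnS.
have : iter (m * (j + i.+1)) par y = r.
  by rewrite -(subnK Hle) iterD Hm iter_r.
rewrite Hq => Hy; move: Hi; rewrite Hy iter_r => <-//.
Qed.

Lemma par_neq x : x != r -> par x != x.
Proof.
move=> Hx; apply/eqP => Hp.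
case: Htree => _ /(_ x) [m Hm].
have : iter m par x = x by elim: m {Hm} => //= m ->.
by rewrite Hm => Hr; rewrite Hr eqxx in Hx.
Qed.

Lemma dep_lt x y : anc x y -> x != y -> dep par x < dep par y.
Proof.
move=> Hxy Hne; apply: proper_card; apply/properP; split.
  by apply/subsetP => z; rewrite !inE => Hz; apply: anc_trans Hz Hxy.
exists y; first by rewrite inE anc_refl.
rewrite inE; apply/negP => Hyx; move/negP: Hne; apply; apply/eqP.
exact: anc_antisym.
Qed.

Lemma child_exists x v : anc x v -> x != v ->
  exists c, [&& c != r, par c == x & anc c v].
Proof.
move=> /ancP[n]; elim: n v => [|n IH] v /=; first by move=> ->; rewrite eqxx.
move=> Hx Hne.
case: (eqVneq (iter n par v) r) => Hr.
  apply: IH => //; by rewrite Hr -Hx Hr; case: Htree.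
exists (iter n par v); rewrite Hr Hx eqxx /=.
by apply/ancP; exists n.
Qed.


Definition onp (v a b : V) : bool :=
  [forall x, (anc x a == anc x v) ==> (anc x b == anc x a)].

Lemma dT_add (R : numDomainType) (w : V -> R) v a b :
  onp v a b -> (dT par w a b + dT par w b v = dT par w a v)%R.
Proof.
move=> /forallP H; rewrite /dT !(big_mkcond (fun x => _ (+) _)) -big_split /=.
apply: eq_bigr => x _; have := H x.
by case: (anc x a); case: (anc x b); case: (anc x v); rewrite /= ?addr0 ?add0r.
Qed.

Lemma dT_refl (R : numDomainType) (w : V -> R) a : dT par w a a = 0%R.
Proof. by rewrite /dT big_pred0 // => x; exact: addbb. Qed.

Lemma onp_vert1 a b v : anc a b -> anc b v -> onp v a b.
Proof.
move=> Hab Hbv; apply/forallP => x; apply/implyP => /eqP.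
case Ha: (anc x a) => H; first by rewrite (anc_trans Ha Hab).
apply/eqP/negbTE/negP => Hb; by rewrite (anc_trans Hb Hbv) in H.
Qed.

Lemma onp_vert2 a b v : anc v b -> anc b a -> onp v a b.
Proof.
move=> Hvb Hba; apply/forallP => x; apply/implyP => /eqP.
case Ha: (anc x a) => H.
  by rewrite (anc_trans (esym H) Hvb).
apply/eqP/negbTE/negP => Hb; by rewrite (anc_trans Hb Hba) in Ha.
Qed.

Lemma onp_up u y v : anc y u -> ~~ anc y v -> onp v u y.
Proof.
move=> Hyu Hyv; apply/forallP => x; apply/implyP => /eqP.
case Ha: (anc x u) => H.
  case/orP: (anc_comp Ha Hyu) => [->//|Hyx].
  by rewrite (anc_trans Hyx (esym H)) in Hyv.
apply/eqP/negbTE/negP => Hb; by rewrite (anc_trans Hb Hyu) in Ha.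
Qed.

Lemma onp_up2 y v : ~~ anc y v -> onp v y (par y).
Proof.
move=> Hyv; apply/forallP => x; apply/implyP => /eqP.
case Ha: (anc x y) => H.
  case: (anc_step Ha) => [Hxy|->//].
  by rewrite -Hxy -H in Hyv.
apply/eqP/negbTE/negP => Hb; by rewrite (anc_trans Hb (anc_par y)) in Ha.
Qed.

Lemma onp_side u x v : anc x v -> ~~ anc x u -> onp v u x.
Proof.
move=> Hxv Hxu; apply/forallP => z; apply/implyP => /eqP.
case Ha: (anc z u) => H.
  case/orP: (anc_comp (esym H) Hxv) => [->//|Hxz].
  by rewrite (anc_trans Hxz Ha) in Hxu.
apply/eqP/negbTE/negP => Hb; by rewrite (anc_trans Hb Hxv) in H.
Qed.

Lemma onp_v u v : onp v u v.
Proof. by apply/forallP => x; apply/implyP; rewrite eq_sym. Qed.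

Lemma walk_onp (R : numDomainType) (w : V -> R) v u s :
  path (onp v) u s -> (walkw par w u s + dT par w (last u s) v = dT par w u v)%R.
Proof.
elim: s u => [|y s IH] u /=; first by rewrite add0r.
case/andP => Huy Hp; rewrite -addrA IH //; exact: dT_add.
Qed.

Definition cnt (a b : V) : int := dT par (fun _ => 1%R) a b.

Lemma cnt_ge0 a b : (0 <= cnt a b)%R.
Proof. by apply: sumr_ge0. Qed.

Lemma cnt_gt0 a b : a != b -> (1 <= cnt a b)%R.
Proof.
move=> Hne.
have [x0 Hx0] : exists x0, anc x0 a (+) anc x0 b.
  case Hab: (anc a b); last by exists a; rewrite anc_refl Hab.
  exists b; rewrite anc_refl.
  case Hba: (anc b a) => //; by rewrite (anc_antisym Hab Hba) eqxx in Hne.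
rewrite /cnt /dT (bigD1 x0) //= lerDl; exact: sumr_ge0.
Qed.


Lemma comp_exists (A : {set V}) u : u \in A ->
  exists S, component r par A S && (u \in S).
Proof.
move=> Hu.
pose P t := anc t u && [forall z, (anc z u && anc t z) ==> (z \in A)].
have Pu : P u.
  rewrite /P anc_refl /=; apply/forallP => z; apply/implyP => /andP[H1 H2].
  by rewrite (anc_antisym H1 H2).
case: (@arg_minnP _ u P (dep par) Pu) => t /andP[Htu /forallP Ht] Hmin.
have HtA : t \in A by apply: (implyP (Ht t)); rewrite Htu anc_refl.
pose S := [set x in A | anc t x && [forall z, (anc z x && anc t z) ==> (z \in A)]].
have Hpar : forall x, x \in S -> x != t -> par x \in S.
  move=> x; rewrite !inE => /and3P[HxA Htx /forallP Hx] Hne.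
  have Htp : anc t (par x).
    by case: (anc_step Htx) => // Htx'; rewrite Htx' eqxx in Hne.
  have HpA : par x \in A by apply: (implyP (Hx (par x))); rewrite anc_par Htp.
  rewrite HpA Htp /=; apply/forallP => z; apply/implyP => /andP[H1 H2].
  by apply: (implyP (Hx z)); rewrite H2 (anc_trans H1 (anc_par x)).
have HuS : u \in S.
  rewrite inE Hu Htu /=; apply/forallP => z; apply/implyP => /andP[H1 H2].
  by apply: (implyP (Ht z)); rewrite H1 H2.
have HtS : t \in S.
  rewrite inE HtA anc_refl /=; apply/forallP => z; apply/implyP => /andP[H1 H2].
  by rewrite (anc_antisym H1 H2).
exists S; rewrite HuS andbT /component.
apply/and4P; split.
- by apply/set0Pn; exists u.
- by apply/subsetP => x; rewrite inE => /andP[].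
- apply/existsP; exists t; rewrite HtS /=; apply/forallP => x; apply/implyP => Hx.
  have Htx : anc t x by move: Hx; rewrite inE => /and3P[].
  rewrite Htx /=; case: (eqVneq x t) => //= Hne; exact: Hpar.
- apply/forallP => x; apply/implyP => HxS; apply/forallP => y; apply/implyP => HyA.
  apply/implyP; rewrite /adjT /child => /orP[/andP[Hxr /eqP Hpx]|/andP[Hyr /eqP Hpy]].
    case: (eqVneq x t) => Hxt; last by rewrite -Hpx; exact: Hpar.
    subst x.
    have Pp : P (par t).
      rewrite /P (anc_trans (anc_par t) Htu) /=.
      apply/forallP => z; apply/implyP => /andP[Hzu Hpz].
      case/orP: (anc_comp Htu Hzu) => Htz.
        by apply: (implyP (Ht z)); rewrite Hzu Htz.
      case: (anc_step Htz) => [->//|Hzp].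
      by rewrite (anc_antisym Hzp Hpz) Hpx.
    have := Hmin _ Pp; rewrite leqNgt (dep_lt (anc_par t)) //.
    by rewrite par_neq.
  move: HxS; rewrite !inE HyA => /and3P[_ Htx /forallP Hx].
  have Hxy : anc x y by rewrite -Hpy anc_par.
  rewrite (anc_trans Htx Hxy) /=; apply/forallP => z; apply/implyP => /andP[H1 H2].
  case: (anc_step H1) => [->//|]; rewrite Hpy => H3.
  by apply: (implyP (Hx z)); rewrite H3 H2.
Qed.


Variables (c1 : V -> option V) (k : nat).

Lemma subtree_rt (R : {set V}) : subtreeb par R -> rtS r par R \in R.
Proof.
move=> /existsP[t /andP[HtR /forallP Ht]].
rewrite /rtS; case: pickP => [x /andP[]//|H].
have := H t; rewrite HtR /=; move/negbT/negP; case.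
apply/forallP => y; apply/implyP => Hy.
by case/andP: (implyP (Ht y) Hy).
Qed.

Lemma canl_inv f u :
  (exists R, R \in canl r par c1 k f /\ u \in CR r par c1 k R) \/
  (exists R, [/\ R \in canl r par c1 k f, subtreeb par R, u \in R & #|R| + f <= #|V|]).
Proof.
elim: f => [|f [[R [HR Hu]]|[R [HR HsR HuR Hc]]]].
- right; exists setT; rewrite /= inE eqxx in_setT cardsT addn0; split => //.
  apply/existsP; exists r; rewrite in_setT /=; apply/forallP => x.
  by rewrite !in_setT anc_r orbT.
- by left; exists R; rewrite /= inE HR.
- case HuC: (u \in CR r par c1 k R).
    by left; exists R; rewrite /= inE HR.
  right.
  have HuA : u \in R :\: CR r par c1 k R by rewrite inE HuC HuR.
  have [S /andP[HS HuS]] := comp_exists HuA.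
  have HS' := HS; move/and4P: HS' => [_ HSA HsS _].
  have Hrt := subtree_rt HsR.
  have HrtC : rtS r par R \in CR r par c1 k R.
    rewrite /CR; case: ifP => _; last by rewrite !inE eqxx !orbT.
    by move: HuC; rewrite /CR; case: ifP => //; rewrite HuR.
  have HSR : S \proper R.
    apply/properP; split.
      by apply/subsetP => x /(subsetP HSA); rewrite inE => /andP[].
    exists (rtS r par R) => //; apply/negP => /(subsetP HSA).
    by rewrite inE HrtC.
  exists S; split => //.
    rewrite /= inE; apply/orP; right; apply/bigcupP; exists R => //.
    by rewrite inE.
  by have := proper_card HSR; rewrite addnS; move=> H; apply: leq_trans Hc; rewrite ltn_add2r.
Qed.

Lemma canon_exists u : exists R, (R \in canonicals r par c1 k) && (u \in CR r par c1 k R).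
Proof.
case: (canl_inv #|V| u) => [[R [HR Hu]]|[R [_ _ HuR Hc]]].
  by exists R; rewrite /canonicals HR Hu.
have : 0 < #|R| by apply/card_gt0P; exists u.
by move: Hc; rewrite -{2}(add0n #|V|) leq_add2r leqn0 => /eqP ->.
Qed.


Notation CRk := (CR r par c1 k).
Notation adjGk := (adjG r par c1 k).

Lemma Tu_spec u : (Tu r par c1 k u \in canonicals r par c1 k) && (u \in CRk (Tu r par c1 k u)).
Proof.
rewrite /Tu; case: pickP => [R /andP[-> ->]//|H] /=.
have [R HR] := canon_exists u; by rewrite H in HR.
Qed.

Lemma adjG_C u a b : a != b -> a \in CRk (Tu r par c1 k u) -> b \in CRk (Tu r par c1 k u) ->
  adjGk a b.
Proof.
move=> Hne Ha Hb; rewrite /adjG Hne /=; apply/orP; right.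
apply/existsP; exists (Tu r par c1 k u); rewrite Ha Hb andbT.
by case/andP: (Tu_spec u) => ->.
Qed.

Lemma adjG_par x : x != r -> adjGk x (par x).
Proof.
move=> Hx; rewrite /adjG eq_sym par_neq //= /adjT /child Hx eqxx //.
Qed.

Lemma adjG_child x c : c != r -> par c = x -> adjGk x c.
Proof.
move=> Hc <-; rewrite /adjG par_neq //= /adjT /child Hc eqxx /= orbT //.
Qed.

Lemma deepest_spec (X : {set V}) d : X != set0 ->
  deepest par X d \in X /\ forall y, y \in X -> dep par y <= dep par (deepest par X d).
Proof.
move=> HX; rewrite /deepest; case: pickP => [x /andP[Hx /forallP H]|H] /=.
  by split => // y Hy; apply: (implyP (H y)).
have [x0 Hx0] := set0Pn _ HX.
case: (@arg_maxnP _ x0 (fun y => y \in X) (dep par) Hx0) => x Hx Hmax.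
have := H x; rewrite Hx /=; move/negbT/negP; case.
by apply/forallP => y; apply/implyP => Hy; apply: Hmax.
Qed.

Lemma highest_in (X : {set V}) d : d \in X -> highest par X d \in X.
Proof. by rewrite /highest; case: pickP => [x /andP[]|]. Qed.

Lemma childTo_spec x v : anc x v -> x != v ->
  [/\ childTo r par x v != r, par (childTo r par x v) = x & anc (childTo r par x v) v].
Proof.
move=> Hxv Hne; rewrite /childTo; case: pickP => [c /andP[/andP[Hc /eqP Hp] Hcv]|H] //=.
have [c /and3P[Hc Hp Hcv]] := child_exists Hxv Hne.
by have := H c; rewrite /child Hc Hp Hcv.
Qed.


Definition rel2 v a b := onp v a b && ((a == b) || adjGk a b).

Lemma fin2 u x y v : onp v u x -> onp v x y -> x != y -> (u == x) || adjGk u x ->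
  adjGk x y -> path (rel2 v) u [:: x; y] && (cnt y v < cnt u v)%R.
Proof.
move=> H1 H2 Hne H3 H4; rewrite /= /rel2 H1 H2 H3 H4 orbT /=.
have E1 := dT_add (fun _ => 1%R : int) H1.
have E2 := dT_add (fun _ => 1%R : int) H2.
have G1 := cnt_ge0 u x; have G2 := cnt_gt0 Hne.
rewrite /cnt in G1 G2 *; rewrite -E1 -E2.
move: G1 G2; set a := dT _ _ u x; set b := dT _ _ x y; set c := dT _ _ y v.
move=> G1 G2; lia.
Qed.


Lemma rstep_ok u v : u != v ->
  let s := rstep r par c1 k u v in
  path (rel2 v) u s && (cnt (last u s) v < cnt u v)%R.
Proof.
move=> Huv0 /=.
have /andP[HTu HuC] := Tu_spec u.
set C := CRk (Tu r par c1 k u) in HuC *.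
have notv : forall x, x \in C -> ~~ adjGk u v -> x != v.
  move=> x Hx Hadj; apply/eqP => Exv; subst x.
  by rewrite (adjG_C Huv0 HuC Hx) in Hadj.
have Hgen : forall x, x \in C -> (u == x) || adjGk u x.
  move=> x Hx; case: (eqVneq u x) => //= Hne; exact: adjG_C Hne HuC Hx.
rewrite /rstep -/C.
case: ifP => Hadj.
  rewrite /= /rel2 onp_v Hadj orbT /=.
  have := cnt_gt0 Huv0; rewrite /cnt dT_refl => H; apply: lt_le_trans H; done.
move/negbT: Hadj => Hadj.
case: ifP => Hu_v.
  set X := [set x in C | anc x v].
  have HuX : u \in X by rewrite inE HuC.
  have HX0 : X != set0 by apply/set0Pn; exists u.
  have [HxX Hmax] := deepest_spec u HX0.
  set x := deepest par X u in HxX Hmax *.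
  move: (HxX); rewrite inE => /andP[HxC Hxv].
  have Hux : anc u x.
    case/orP: (anc_comp Hu_v Hxv) => // Hxu.
    case: (eqVneq x u) => [->|Hne]; first exact: anc_refl.
    by have := Hmax u HuX; rewrite leqNgt (dep_lt Hxu Hne).
  have Hxnv := notv x HxC Hadj.
  have [Hcr Hcp Hcv] := childTo_spec Hxv Hxnv.
  apply: fin2.
  - exact: onp_vert1 Hux Hxv.
  - by apply: onp_vert1 Hcv; have := anc_par (childTo r par x v); rewrite Hcp.
  - by have := par_neq Hcr; rewrite Hcp.
  - exact: Hgen.
  - exact: adjG_child.
case: ifP => Hv_u.
  set X := [set x in C | anc v x && anc x u].
  have HuX : u \in X by rewrite inE HuC Hv_u anc_refl.
  have HxX := highest_in HuX.
  set x := highest par X u in HxX *.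
  move: (HxX); rewrite inE => /and3P[HxC Hvx Hxu].
  have Hxnv := notv x HxC Hadj.
  have Hxr : x != r.
    apply/eqP => Exr; move: Hvx; rewrite Exr => Hvr.
    by rewrite (anc_antisym Hvr (anc_r v)) -Exr eqxx in Hxnv.
  have Hvp : anc v (par x).
    by case: (anc_step Hvx) => // E; rewrite E eqxx in Hxnv.
  apply: fin2.
  - exact: onp_vert2 Hvx Hxu.
  - exact: onp_vert2 Hvp (anc_par x).
  - by rewrite eq_sym par_neq.
  - exact: Hgen.
  - exact: adjG_par.
case: ifP => HX.
  set Y := [set y in C | anc y u && ~~ anc y v].
  have HuY : u \in Y by rewrite inE HuC anc_refl Hu_v.
  have HyY := highest_in HuY.
  set y := highest par Y u in HyY *.
  move: (HyY); rewrite inE => /and3P[HyC Hyu Hyv].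
  have Hyr : y != r by apply/eqP => E; rewrite E anc_r in Hyv.
  apply: fin2.
  - exact: onp_up Hyu Hyv.
  - exact: onp_up2 Hyv.
  - by rewrite eq_sym par_neq.
  - exact: Hgen.
  - exact: adjG_par.
set X := [set x in C | anc x v && ~~ anc x u].
move/negbT: HX => HX0.
have [HxX _] := deepest_spec u HX0.
set x := deepest par X u in HxX *.
move: (HxX); rewrite inE => /and3P[HxC Hxv Hxu].
have Hxnv := notv x HxC Hadj.
have [Hcr Hcp Hcv] := childTo_spec Hxv Hxnv.
apply: fin2.
- exact: onp_side Hxv Hxu.
- by apply: onp_vert1 Hcv; have := anc_par (childTo r par x v); rewrite Hcp.
- by have := par_neq Hcr; rewrite Hcp.
- exact: Hgen.
- exact: adjG_child.
Qed.


Lemma route_ok v f u : (cnt u v < f%:Z)%R ->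
  last u (route r par c1 k f u v) = v /\ path (rel2 v) u (route r par c1 k f u v).
Proof.
elim: f u => [|f IH] u Hf /=.
  by have := cnt_ge0 u v; lia.
case: eqVneq => [->|Hne] //=.
have /andP[Hp Hc] := rstep_ok Hne.
have Hl : (cnt (last u (rstep r par c1 k u v)) v < f%:Z)%R.
  move: Hf Hc; set a := cnt _ v; set b := cnt _ v; move=> Hf Hc; lia.
have [IH1 IH2] := IH (last u (rstep r par c1 k u v)) Hl.
by rewrite last_cat cat_path Hp IH1 IH2.
Qed.

End TreeLemmas.

Theorem theorem2 (R : realDomainType) (V : finType) (r : V) (par : V -> V)
    (w : V -> R) (c1 : V -> option V) (k : nat) :
  is_rooted_tree r par ->
  (forall x, x != r -> 0 < w x)%R ->
  heavy_child_spec r par c1 ->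
  4 <= k ->
  forall u v : V,
    exists N : nat,
      let p := route r par c1 k N u v in
      [/\ last u p = v,
          walkw par w u p = dT par w u v &
          path (fun a b => (a == b) || adjG r par c1 k a b) u p].
Proof.
move=> Htree _ _ _ u v.
exists (absz (cnt par u v)).+1 => /=.
have G := cnt_ge0 par u v.
have E : ((absz (cnt par u v))%:Z = cnt par u v)%R by rewrite abszE ger0_norm.
have Hlt : (cnt par u v < ((absz (cnt par u v)).+1)%:Z)%R.
  by rewrite -[X in (X < _)%R]E ltz_nat.
have [H1 H2] := route_ok Htree c1 k Hlt.
split => //.
- have := walk_onp w (sub_path (fun a b (H : rel2 r par c1 k v a b) => proj1 (andP H)) H2).
  by rewrite H1 dT_refl addr0.
- by apply: sub_path H2 => a b /andP[].
Qed.
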